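(* Consider the partial-block protocol described in the context, on a finite set of agents $A$ with a connected undirected connectivity graph $G=(A,E)$, and suppose the block length satisfies $L\le |A|$. Then a deadlock never occurs: for every epoch $t$ it is not the case that $D(i)$ holds for all $i\in A$.
   Context: Let $A$ be a finite set of agents (agent IDs) and $G=(A,E)$ a connected undirected graph; $\Gamma_i$ denotes the set of neighbors of $i$. Fix an integer $L\ge 1$ (block length). Each agent $i$ maintains a partial block $pb_i\subseteq A$ (a set of agent IDs). The system runs in epochs $t=0,1,2,\dots$; $pb_i^{(t)}$ is agent $i$'s partial block at the start of epoch $t$. In each epoch: (C1) every agent $i$ with $i\notin pb_i$ adds $i$ to $pb_i$; (C2) every agent $i$ sends its $pb_i$ to every neighbor $j\in\Gamma_i$. When an agent $i$ receives a partial block $P$ (from a neighbor or via a direct message) it applies the rule: (R1) if $|P\setminus\{i\}|>|pb_i\setminus\{i\}|$, agent $i$ sets $pb_i:=P$; (R2) otherwise, if $|P\setminus\{i\}|=|pb_i\setminus\{i\}|$ and $P\neq pb_i$, agent $i$ sends its current $pb_i$ directly to every agent in $P\setminus pb_i$, each of which processes it by the same rule; (R3) otherwise the received block is discarded. All received partial blocks are assumed to pass all validity and similarity checks. For an agent $i$ and epoch $t$, the predicate $D(i)$ means: $pb_i^{(t)}=pb_i^{(t+1)}$ and $|pb_i^{(t)}|<L$. A deadlock at epoch $t$ means that $D(i)$ holds for all $i\in A$. *)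

(* Defs.v *)
From mathcomp Require Import all_boot all_order.
Set Implicit Arguments. Unset Strict Implicit. Unset Printing Implicit Defensive.

Section Protocol.
Variable A : finType.
Variable E : rel A.

Definition neighbors (i : A) : {set A} := [set j | E i j].

(* global state: partial block pb_i of every agent i *)
Definition state := A -> {set A}.

(* a message: (recipient, partial block carried) *)
Definition msg := (A * {set A})%type.

Definition upd (s : state) (i : A) (P : {set A}) : state :=
  fun j => if j == i then P else s j.

(* Agent i receives partial block P in state s: rules R1/R2/R3.
   Returns the new state and the direct messages sent (R2). *)
Definition receive (s : state) (i : A) (P : {set A}) : state * seq msg :=
  if #|s i :\ i| < #|P :\ i| then (upd s i P, [::])
  else if (#|P :\ i| == #|s i :\ i|) && (P != s i)
       then (s, [seq (k, s i) | k <- enum (P :\: s i)])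
       else (s, [::]).

(* One delivery: any pending message (in arbitrary order) is processed;
   the direct messages it triggers are added to the pending pool. *)
Inductive deliver : state * seq msg -> state * seq msg -> Prop :=
| Deliver s l1 l2 i P :
    deliver (s, l1 ++ (i, P) :: l2)
            ((receive s i P).1, l1 ++ l2 ++ (receive s i P).2).

Inductive deliver_star : state * seq msg -> state * seq msg -> Prop :=
| DS_refl c : deliver_star c c
| DS_step c1 c2 c3 : deliver c1 c2 -> deliver_star c2 c3 -> deliver_star c1 c3.

(* State after (C1): every agent adds itself to its partial block. *)
Definition after_C1 (s : state) : state := fun i => i |: s i.

(* Messages sent in (C2): every agent sends its pb to every neighbour. *)
Definition C2_msgs (s : state) : seq msg :=
  [seq (j, s i) | i <- enum A, j <- enum (neighbors i)].

(* One epoch leads from state s (start of epoch t) to s' (start of epoch t+1):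
   (C1), then (C2), then all messages (incl. direct ones) are processed, in
   any order, until none is pending. *)
Definition epoch (s s' : state) : Prop :=
  deliver_star (after_C1 s, C2_msgs (after_C1 s)) (s', [::]).

Definition Dpred (L : nat) (pb : nat -> state) (t : nat) (i : A) : Prop :=
  pb t i = pb t.+1 i /\ #|pb t i| < L.

Definition deadlock (L : nat) (pb : nat -> state) (t : nat) : Prop :=
  forall i : A, Dpred L pb t i.

End Protocol.

(* Main.v *)
Require Import Defs.
From mathcomp Require Import all_boot all_order.
From mathcomp Require Import zify.
Set Warnings "-notation-overridden".

Section Aux.
Variable A : finType.

Definition Q (s : state A) (m : msg A) := #|m.2 :\ m.1| <= #|s m.1 :\ m.1|.

Lemma recv_mono (s : state A) i P j : #|s j :\ j| <= #|(receive s i P).1 j :\ j|.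
Proof.
rewrite /receive; case: ifP => h /=; last by case: ifP.
rewrite /upd; case: eqP => [->|//]; exact: ltnW.
Qed.

Lemma recv_R1 (s : state A) i P : #|s i :\ i| < #|P :\ i| ->
  #|s i :\ i| < #|(receive s i P).1 i :\ i|.
Proof. by move=> h; rewrite /receive h /= /upd eqxx. Qed.

Lemma recv_noR1 (s : state A) i P : ~~ (#|s i :\ i| < #|P :\ i|) ->
  (receive s i P).1 = s.
Proof. by move=> /negbTE h; rewrite /receive h; case: ifP. Qed.

Lemma star_mono (c1 c3 : state A * seq (msg A)) : deliver_star c1 c3 ->
  forall j, #|c1.1 j :\ j| <= #|c3.1 j :\ j|.
Proof.
elim=> [//|c1' c2 c3' d _ IH] j.
apply: leq_trans (IH j); case: d => s l1 l2 i P /=; exact: recv_mono.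
Qed.

Lemma inv (c1 c3 : state A * seq (msg A)) : deliver_star c1 c3 -> c3.2 = [::] ->
  (forall j, #|c3.1 j :\ j| <= #|c1.1 j :\ j|) ->
  (forall j, c3.1 j = c1.1 j) /\
  (forall m, m \in c1.2 -> Q c1.1 m /\
     forall m', m' \in (receive c1.1 m.1 m.2).2 -> Q c1.1 m').
Proof.
elim=> [[s l] /= -> _|c1' c2 c3' d st IH e3 r3]; first by split.
case: d st IH r3 => s l1 l2 i P st IH r3 /=.
have m2 := star_mono _ _ st.
have nR1 : ~~ (#|s i :\ i| < #|P :\ i|).
  apply/negP => h; have := r3 i; have := m2 i; have := recv_R1 _ _ _ h.
  move=> /= a b c; have := leq_trans (leq_trans a b) c; by rewrite ltnn.
have e1 := recv_noR1 _ _ _ nR1.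
have [IH1 IH2] : (forall j, c3'.1 j = ((receive s i P).1, l1 ++ l2 ++ (receive s i P).2).1 j) /\
  (forall m, m \in ((receive s i P).1, l1 ++ l2 ++ (receive s i P).2).2 ->
     Q ((receive s i P).1, l1 ++ l2 ++ (receive s i P).2).1 m /\
     forall m', m' \in (receive ((receive s i P).1, l1 ++ l2 ++ (receive s i P).2).1 m.1 m.2).2 ->
       Q ((receive s i P).1, l1 ++ l2 ++ (receive s i P).2).1 m').
  apply: IH => // j; by rewrite /= e1.
move: IH1 IH2; rewrite /= e1 => IH1 IH2; split => // m.
rewrite mem_cat inE => /or3P [h|/eqP->|h].
- by apply: IH2; rewrite mem_cat h.
- split; first by rewrite /Q /= leqNgt.
  move=> mm hm; have [] := IH2 mm; last done; rewrite mem_cat orbC mem_cat.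
  by move: hm; rewrite /= -e1 => ->; rewrite orbT.
- by apply: IH2; rewrite mem_cat orbC mem_cat h.
Qed.

End Aux.

Theorem corollary1 (A : finType) (E : rel A) (L : nat)
  (Esym : symmetric E) (Eirr : irreflexive E)
  (Econn : forall i j : A, connect E i j)
  (L_ge1 : 1 <= L) (L_le : L <= #|A|)
  (pb : nat -> state A) (t : nat)
  (run : forall u : nat, u <= t -> epoch E (pb u) (pb u.+1)) :
  ~ deadlock L pb t.
Proof.
move=> dl.
have ep := run t (leqnn t).
set S := after_C1 (pb t).
have rk : forall j, (j |: pb t j) :\ j = pb t j :\ j.
  move=> j; apply/setP => x; rewrite !inE; by case: eqP.
have r3 : forall j, #|pb t.+1 j :\ j| <= #|S j :\ j|.
  by move=> j; rewrite -(dl j).1 /S /after_C1 rk.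
have [H1 H2] := inv _ _ _ ep erefl r3; rewrite /= -/S in H1 H2.
have inS : forall j, j \in S j by move=> j; rewrite /S /after_C1 setU11.
have cS : forall j, #|S j| < L by move=> j; rewrite -H1 -(dl j).1; exact: (dl j).2.
have mC2 : forall i j, E i j -> (j, S i) \in C2_msgs E S.
  move=> i j eij; apply/allpairsPdep; exists i, j.
  by rewrite mem_enum inE mem_enum inE.
have cD1 : forall (X : {set A}) k, k \in X -> #|X :\ k| = #|X| - 1.
  by move=> X k kX; rewrite (cardsD1 k X) kX; lia.
have cD0 : forall (X : {set A}) k, k \notin X -> #|X :\ k| = #|X|.
  by move=> X k kX; rewrite (cardsD1 k X) (negbTE kX).
have cpos : forall k, 0 < #|S k| by move=> k; apply/card_gt0P; exists k.
have [x0 _] : exists x0 : A, x0 \in A by apply/card_gt0P; apply: leq_trans L_ge1 L_le.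
case: (@arg_maxnP A x0 predT (fun i => #|S i|) isT) => i0 _ Hmax.
set M := #|S i0|.
set X := [set j | S j == S i0].
have key : forall j k, j \in X -> E j k -> k \in X.
  move=> j k; rewrite !inE => /eqP Sj ejk.
  have [Qa Qb] := H2 _ (mC2 _ _ ejk).
  rewrite /Q /= in Qa.
  have Mk := Hmax k isT.
  have ck := cpos k.
  rewrite (cD1 _ _ (inS k)) in Qa.
  have kSj : k \in S j.
    apply/negPn/negP => nk; rewrite (cD0 _ _ nk) Sj -/M in Qa; lia.
  rewrite (cD1 _ _ kSj) Sj -/M in Qa.
  have cSk : #|S k| = M by lia.
  apply/eqP; apply/eqP; rewrite -Sj eq_sym.
  apply/negPn/negP => neq.
  have [l lin] : exists l, l \in S j :\: S k.
    apply/set0Pn; apply/negP => /eqP e0.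
    move/negP: neq; apply; rewrite eqEcard.
    by rewrite -setD_eq0 e0 eqxx /= cSk Sj.
  have ml : (l, S k) \in (receive S k (S j)).2.
    rewrite /receive ltnNge.
    have -> : #|S j :\ k| <= #|S k :\ k| by rewrite (cD1 _ _ kSj) (cD1 _ _ (inS k)) Sj -/M cSk.
    rewrite /= (cD1 _ _ kSj) (cD1 _ _ (inS k)) Sj -/M cSk eqxx /=.
    rewrite -Sj neq /=.
    by apply/mapP; exists l; rewrite ?mem_enum.
  have := Qb _ ml; rewrite /Q /=.
  move: lin; rewrite inE => /andP [lnk _].
  rewrite (cD0 _ _ lnk) (cD1 _ _ (inS l)) cSk.
  have := Hmax l isT; have := cpos l; lia.
have clX : closed E X.
  move=> x y exy; apply/idP/idP => h; first exact: key h exy.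
  by apply: key h _; rewrite Esym.
have allX : forall j, j \in X.
  move=> j; rewrite -(closed_connect clX (Econn i0 j)) inE eqxx //.
have sub : [set: A] \subset S i0.
  apply/subsetP => j _; have := allX j; rewrite inE => /eqP <-; exact: inS.
have := subset_leq_card sub; rewrite cardsT.
have := cS i0; lia.
Qed.
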